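(* (a) For $t\ge 3$ and $1\le n_1\le\cdots\le n_t$, $crx_1(K_{n_1,\dots,n_t})=3$. (b) For all $k,t\ge 2$ there exists $N=N(k,t)$ such that $crx_k(K_{t\times n})=2k$ for all $n\ge N$.
   Context: $K_{n_1,\dots,n_t}$ is the complete $t$-partite graph with class sizes $n_1,\dots,n_t$, and $K_{t\times n}$ is the complete $t$-partite graph with every class of size $n$. An edge-coloured cycle is rainbow if its edges have distinct colours. For a graph $G$ in which any $k$ vertices lie on a common cycle, $crx_k(G)$ is the minimum number of colours in an edge-colouring of $G$ such that every set of $k$ vertices of $G$ lies in some rainbow cycle. *)

(* Defs.v *)
From mathcomp Require Import all_boot.
Set Implicit Arguments. Unset Strict Implicit. Unset Printing Implicit Defensive.

(* The complete t-partite graph K_{n_1,...,n_t}: vertices are pairs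
   (i, j) with i : 'I_t the class and j : 'I_(n i) the index inside the
   class; two vertices are adjacent iff they lie in different classes. *)
Definition Kvert (t : nat) (n : 'I_t -> nat) : finType := {i : 'I_t & 'I_(n i)}.

Definition Kadj (t : nat) (n : 'I_t -> nat) : rel (Kvert n) :=
  fun x y => tag x != tag y.

Definition is_graph_cycle (T : finType) (e : rel T) (p : seq T) : Prop :=
  [/\ 3 <= size p, uniq p & cycle e p].

Definition cycle_edges (T : finType) (p : seq T) : seq {set T} :=
  [seq [set a.1; a.2] | a <- zip p (rot 1 p)].

(* An edge-colouring with (at most) m colours assigns to each edge
   (an unordered pair {x,y}, encoded as a 2-element set) a colour in 'I_m. *)
Definition rainbow (T : finType) (m : nat) (col : {set T} -> 'I_m) (p : seq T) : bool :=
  uniq (map col (cycle_edges p)).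

Definition k_rainbow_cycle_colouring (T : finType) (e : rel T) (k m : nat)
    (col : {set T} -> 'I_m) : Prop :=
  forall S : {set T}, #|S| = k ->
    exists p : seq T, [/\ is_graph_cycle e p, {subset S <= p} & rainbow col p].

Definition crx_colourable (T : finType) (e : rel T) (k m : nat) : Prop :=
  exists col : {set T} -> 'I_m, k_rainbow_cycle_colouring e k col.

Definition crx_is (T : finType) (e : rel T) (k m : nat) : Prop :=
  crx_colourable e k m /\ forall m', m' < m -> ~ crx_colourable e k m'.

(* Main.v *)
Require Import Defs.
From mathcomp Require Import all_boot.
From mathcomp Require Import zify.
Set Implicit Arguments. Unset Strict Implicit. Unset Printing Implicit Defensive.


Lemma nth_rot1 (T : Type) (x0 : T) (p : seq T) i :
  i < size p -> nth x0 (rot 1 p) i = nth x0 p ((i + 1) %% size p).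
Proof.
case: p => [|a q] //= Hi; rewrite rot1_cons nth_rcons.
case: ltnP => H1.
  by rewrite modn_small ?addn1 //; lia.
have -> : i = size q by lia.
by rewrite eqxx addn1 modnn.
Qed.

Lemma nth_zip_rot (T : Type) (x0 : T) (p : seq T) i :
  i < size p -> nth (x0, x0) (zip p (rot 1 p)) i
                = (nth x0 p i, nth x0 p ((i + 1) %% size p)).
Proof. by move=> Hi; rewrite nth_zip ?size_rot // nth_rot1. Qed.

Lemma cycle_nthP (T : Type) (x0 : T) (e : rel T) (p : seq T) :
  0 < size p ->
  cycle e p <-> (forall i, i < size p -> e (nth x0 p i) (nth x0 p ((i + 1) %% size p))).
Proof.
move=> Hp; rewrite (cycle_path x0); split.
- move/(pathP x0) => H i Hi.
  case: (ltnP (i + 1) (size p)) => Hi1.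
    have := H (i + 1) Hi1; rewrite addn1 /= modn_small //; lia.
  have Ei : i.+1 = size p by lia.
  have := H 0 Hp; rewrite /= -nth_last -Ei /=.
  by rewrite addn1 Ei modnn.
- move=> H; apply/(pathP x0) => i Hi.
  case: i Hi => [|i] Hi /=.
    rewrite -nth_last.
    have := H (size p).-1; rewrite addn1 prednK // modnn; apply; lia.
  have := H i; rewrite modn_small ?addn1; [apply; lia| lia].
Qed.

Lemma count_rot1 (T : Type) (a : pred T) (p : seq T) : count a (rot 1 p) = count a p.
Proof. by rewrite /rot count_cat addnC -count_cat cat_take_drop. Qed.

Lemma size_cycle_edges (T : finType) (p : seq T) : size (cycle_edges p) = size p.
Proof. by rewrite /cycle_edges size_map size_zip size_rot minnn. Qed.

Lemma rainbow_size (T : finType) m (col : {set T} -> 'I_m) p :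
  rainbow col p -> size p <= m.
Proof.
rewrite /rainbow => U.
have := uniq_leq_size U (fun x _ => mem_enum _ x).
by rewrite size_map size_cycle_edges size_enum_ord.
Qed.

Lemma cycle_class_bound t (n : 'I_t -> nat) (p : seq (Kvert n)) (i0 : 'I_t) :
  cycle (@Kadj t n) p -> 2 * count (fun v => tag v == i0) p <= size p.
Proof.
case: p => [//|x0 q] Hc.
set p := x0 :: q.
have Hp : 0 < size p by [].
set z := zip p (rot 1 p).
have Hall : all (fun ab => Kadj ab.1 ab.2) z.
  apply/(all_nthP (x0, x0)) => i; rewrite size_zip size_rot minnn => Hi.
  by rewrite nth_zip_rot //; apply: (proj1 (cycle_nthP x0 _ Hp) Hc).
set a := fun v : Kvert n => tag v == i0.
have E1 : count a p = count (fun ab => a ab.1) z.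
  by rewrite -[in LHS](@unzip1_zip _ _ p (rot 1 p)) ?size_rot // count_map.
have E2 : count a p = count (fun ab => a ab.2) z.
  by rewrite -count_rot1 -[in LHS](@unzip2_zip _ _ p (rot 1 p)) ?size_rot // count_map.
have E3 : count (predI (fun ab => a ab.1) (fun ab => a ab.2)) z = 0.
  apply/eqP; rewrite -leqn0 leqNgt -has_count; apply/negP => /hasP [[u v] /(allP Hall) /=].
  by rewrite /Kadj /a /= => /negP H /andP [/eqP H1 /eqP H2]; apply: H; rewrite H1 H2.
have := count_predUI (fun ab => a ab.1) (fun ab => a ab.2) z.
rewrite E3 addn0 -E1 -E2 addnn -mul2n => <-.
by have := count_size (predU (fun ab => a ab.1) (fun ab => a ab.2)) z; rewrite size_zip size_rot minnn.
Qed.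

Lemma count_subset (T : finType) (S : {set T}) (p : seq T) (a : pred T) :
  uniq p -> {subset S <= p} -> {subset S <= a} -> #|S| <= count a p.
Proof.
move=> Up HS Ha.
apply: (leq_trans _ (sub_count (a1 := mem S) _ p)); last by move=> x /Ha.
rewrite -size_filter cardE; apply: uniq_leq_size; first exact: enum_uniq.
by move=> x; rewrite mem_enum mem_filter => xS; apply/andP; split; [exact: xS | exact: HS].
Qed.


Section PartA.
Variables (t : nat) (n : 'I_t -> nat).
Hypothesis t3 : 3 <= t.
Hypothesis Hn : forall i, 0 < n i.

Definition vtx (i : 'I_t) : Kvert n := Tagged (fun i => 'I_(n i)) (Ordinal (Hn i)).
Definition i0 : 'I_t := Ordinal (leq_trans (isT : 0 < 3) t3).
Definition i1 : 'I_t := Ordinal (leq_trans (isT : 1 < 3) t3).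
Definition i2 : 'I_t := Ordinal t3.
Definition o0 : 'I_3 := @Ordinal 3 0 isT.
Definition o1 : 'I_3 := @Ordinal 3 1 isT.
Definition o2 : 'I_3 := @Ordinal 3 2 isT.

Definition col3 (A : {set Kvert n}) : 'I_3 :=
  if [exists a in A, tag a == i0] && [exists a in A, tag a == i1] then o0
  else if [exists a in A, tag a == i0] then o2 else o1.

Lemma ex2 (a b : Kvert n) i :
  [exists z in [set a; b], tag z == i] = (tag a == i) || (tag b == i).
Proof.
apply/existsP/orP.
  by case=> z /andP [/set2P [->|->] ->]; [left|right].
by case=> H; [exists a | exists b]; rewrite !inE eqxx ?orbT H.
Qed.

Lemma col3E (a b : Kvert n) : col3 [set a; b] =
  if ((tag a == i0) || (tag b == i0)) && ((tag a == i1) || (tag b == i1)) then o0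
  else if (tag a == i0) || (tag b == i0) then o2 else o1.
Proof. by rewrite /col3 !ex2. Qed.

Lemma triangle (x y z : Kvert n) :
  tag x != tag y -> tag y != tag z -> tag z != tag x ->
  is_graph_cycle (@Kadj t n) [:: x; y; z].
Proof.
move=> Hxy Hyz Hzx; split => //=.
  rewrite !inE negb_or !andbT; apply/andP; split; [apply/andP; split|];
  apply/eqP => E; by move: Hxy Hyz Hzx; rewrite E !eqxx.
by rewrite /Kadj Hxy Hyz Hzx.
Qed.

Lemma partA_up : crx_colourable (@Kadj t n) 1 3.
Proof.
exists col3 => S /eqP /cards1P [x ->].
have t0 : tag (vtx i0) = i0 by [].
have t1 : tag (vtx i1) = i1 by [].
have t2 : tag (vtx i2) = i2 by [].
have d01 : (i0 == i1) = false by [].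
have d02 : (i0 == i2) = false by [].
have d12 : (i1 == i2) = false by [].
have d10 : (i1 == i0) = false by [].
have d20 : (i2 == i0) = false by [].
have d21 : (i2 == i1) = false by [].
have sub : forall y z, {subset [set x] <= [:: x; y; z]}.
  by move=> y z v; rewrite inE => /eqP ->; rewrite inE eqxx.
case: (eqVneq (tag x) i0) => [H0|H0].
  exists [:: x; vtx i1; vtx i2]; split => //.
    by apply: triangle; rewrite ?t1 ?t2 ?H0 ?d01 ?d12 ?d20.
  by rewrite /rainbow /cycle_edges /= !col3E H0 t1 t2 ?d01 ?d02 ?d10 ?d12 ?d20 ?d21 /=.
case: (eqVneq (tag x) i1) => [H1|H1].
  exists [:: x; vtx i0; vtx i2]; split => //.
    by apply: triangle; rewrite ?t0 ?t2 ?H1 ?d10 ?d02 ?d21.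
  by rewrite /rainbow /cycle_edges /= !col3E H1 t0 t2 ?d01 ?d02 ?d10 ?d12 ?d20 ?d21 /=.
exists [:: x; vtx i0; vtx i1]; split => //.
  by apply: triangle; rewrite ?t0 ?t1 ?d01 // eq_sym.
by rewrite /rainbow /cycle_edges /= !col3E (negbTE H0) (negbTE H1) t0 t1 ?d01 ?d10 ?eqxx /=.
Qed.

Lemma partA_low m : m < 3 -> ~ crx_colourable (@Kadj t n) 1 m.
Proof.
move=> Hm [col Hc].
have [p [[Hs _ _] _ Hr]] := Hc [set vtx i0] (cards1 _).
have := rainbow_size Hr; lia.
Qed.

End PartA.


Lemma partB_low t n k m : 0 < t -> k <= n -> m < 2 * k ->
  ~ crx_colourable (@Kadj t (fun _ => n)) k m.
Proof.
move=> t0 kn Hm [col Hc].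
pose c0 : 'I_t := Ordinal t0.
pose f (j : 'I_k) : Kvert (fun _ : 'I_t => n) := @existT 'I_t (fun _ => 'I_n) c0 (widen_ord kn j).
have finj : injective f.
  move=> a b E.
  have /= E' := congr1 (fun u : Kvert (fun _ : 'I_t => n) => nat_of_ord (tagged u)) E.
  exact: val_inj.
have [p [[Hs Hu Hcy] Hsub Hr]] := Hc (f @: 'I_k) (etrans (card_imset _ finj) (card_ord k)).
pose a := fun v : Kvert (fun _ : 'I_t => n) => tag v == c0.
have H1 : 2 * count a p <= size p := cycle_class_bound c0 Hcy.
have H2 := count_subset (a := a) Hu Hsub.
have H3 : {subset f @: 'I_k <= a}.
  by move=> v /imsetP [j _ ->].
have := H2 H3; rewrite (card_imset _ finj) card_ord => H4.
have := rainbow_size Hr; lia.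
Qed.


Definition qr d := (d == 1) || (d == 2) || (d == 4).
Lemma paleyb : all (fun a => all (fun b => has (fun c => qr ((c + 7 - a) %% 7) && qr ((c + 7 - b) %% 7)) (iota 0 7)) (iota 0 7)) (iota 0 7).
Proof. by []. Qed.
Lemma antib : all (fun a => all (fun b => qr ((a + 7 - b) %% 7) ==> ~~ qr ((b + 7 - a) %% 7)) (iota 0 7)) (iota 0 7).
Proof. by []. Qed.

Lemma paley a b : a < 7 -> b < 7 ->
  exists2 c, c < 7 & qr ((c + 7 - a) %% 7) && qr ((c + 7 - b) %% 7).
Proof.
move=> Ha Hb; have /allP /(_ a) := paleyb; rewrite mem_iota => /(_ Ha) /allP /(_ b).
rewrite mem_iota => /(_ Hb) /hasP [c]; rewrite mem_iota => Hc H; by exists c.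
Qed.

Lemma anti a b : a < 7 -> b < 7 -> qr ((a + 7 - b) %% 7) -> ~~ qr ((b + 7 - a) %% 7).
Proof.
move=> Ha Hb; have /allP /(_ a) := antib; rewrite mem_iota => /(_ Ha) /allP /(_ b).
by rewrite mem_iota => /(_ Hb) /implyP.
Qed.

Lemma dm q r d : r < d -> (q * d + r) %/ d = q /\ (q * d + r) %% d = r.
Proof.
move=> Hr; have d0 : 0 < d by lia.
by rewrite divnMDl // divn_small // addn0 modnMDl modn_small.
Qed.

Lemma lt_step q a A B : a < A -> q < B -> q * A + a < B * A.
Proof. move=> Ha Hq; nia. Qed.

Section Col.
Variables (t n k : nat).
Hypothesis k2 : 2 <= k.

Definition mm := 2 * k.
Lemma mpos : 0 < mm. Proof. rewrite /mm; lia. Qed.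
Definition QQ := mm.+1.
Definition CC := QQ * mm * mm * 3 * 7.
Definition bb := n %/ CC.
Hypothesis hb : CC + t + 1 <= bb.

Local Notation T := (Kvert (fun _ : 'I_t => n)).

Definition jj (v : T) : nat := nat_of_ord (tagged v).
Definition feat r (v : T) : nat :=
  if r == 0 then nat_of_ord (tag v) else if r == 1 then jj v %% bb else jj v %/ bb.

Lemma CC_pos : 0 < CC. Proof. rewrite /CC /QQ /mm; nia. Qed.

Lemma feat_lt r v : feat r v < bb.
Proof.
rewrite /feat; case: eqP => _; first by have := ltn_ord (tag v); lia.
case: eqP => _; first by apply: ltn_pmod; lia.
rewrite ltn_divLR; last by lia.
have H1 : jj v < n by exact: ltn_ord.
have H2 := ltn_ceil n CC_pos; rewrite -/bb in H2.
nia.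
Qed.

Lemma feat_inj v v' : (forall r, r < 3 -> feat r v = feat r v') -> v = v'.
Proof.
case: v => i j; case: v' => i' j' H.
have Ei : i = i' by apply: val_inj; exact: (H 0 isT).
subst i'; congr existT; apply: val_inj => /=.
have H1 := H 1 isT; have H2 := H 2 isT; rewrite /feat /jj /= in H1 H2.
by rewrite (divn_eq j bb) (divn_eq j' bb) H1 H2.
Qed.

Definition tau (v : T) := jj v %% 7.
Definition dom (y x : T) := qr ((tau y + 7 - tau x) %% 7).

Lemma tau_lt v : tau v < 7. Proof. exact: ltn_pmod. Qed.

Lemma dom_irr x : ~~ dom x x.
Proof. by rewrite /dom addKn modnn. Qed.

Lemma dom_anti x y : dom y x -> ~~ dom x y.
Proof. exact: anti (tau_lt _) (tau_lt _). Qed.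

Definition pc (y x : T) : 'I_mm :=
  let j := jj y in
  if feat ((j %/ 7) %% 3) x == (j %/ 7 %/ 3) %% bb
  then Ordinal (ltn_pmod (j %/ 7 %/ 3 %/ bb) mpos)
  else Ordinal (ltn_pmod (j %/ 7 %/ 3 %/ bb %/ mm) mpos).

Definition col (A : {set T}) : 'I_mm :=
  match [pick y in A | [exists x in A, dom y x]] with
  | Some y => match [pick x in A | dom y x] with
              | Some x => pc y x
              | None => Ordinal mpos end
  | None => Ordinal mpos end.

Lemma colE x y : dom y x -> col [set x; y] = pc y x.
Proof.
move=> Hd; rewrite /col.
case: pickP => [y' /andP [/set2P Hy' /existsP [x' /andP [/set2P Hx' Hd']]] | H].
  have Ey : y' = y.
    case: Hy' => // Ey; subst y'.
    case: Hx' => Ex; subst x'; first by move: (dom_irr x); rewrite Hd'.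
    by move: (dom_anti Hd); rewrite Hd'.
  subst y'.
  case: pickP => [x'' /andP [/set2P Hx'' Hd''] | H].
    case: Hx'' => E; subst x'' => //.
    by move: (dom_irr y); rewrite Hd''.
  by move: (H x); rewrite !inE eqxx Hd.
move: (H y); rewrite !inE eqxx orbT /=; move/negbT/negP; case.
by apply/existsP; exists x; rewrite !inE eqxx Hd.
Qed.

Definition enc tau r d c c' s := ((((s * mm + c') * mm + c) * bb + d) * 3 + r) * 7 + tau.

Lemma bb_pos : 0 < bb. Proof. lia. Qed.

Lemma enc_dec ta r d c c' s : ta < 7 -> r < 3 -> d < bb -> c < mm -> c' < mm ->
  let j := enc ta r d c c' s in
  [/\ j %% 7 = ta, (j %/ 7) %% 3 = r, (j %/ 7 %/ 3) %% bb = d,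
      (j %/ 7 %/ 3 %/ bb) %% mm = c & (j %/ 7 %/ 3 %/ bb %/ mm) %% mm = c']
    /\ j %/ 7 %/ 3 %/ bb %/ mm %/ mm = s.
Proof.
move=> H1 H2 H3 H4 H5 j; rewrite /j /enc.
have [-> ->] := dm ((((s * mm + c') * mm + c) * bb + d) * 3 + r) H1.
have [-> ->] := dm (((s * mm + c') * mm + c) * bb + d) H2.
have [-> ->] := dm ((s * mm + c') * mm + c) H3.
have [-> ->] := dm (s * mm + c') H4.
have [-> ->] := dm s H5.
by [].
Qed.

Lemma enc_lt ta r d c c' s : ta < 7 -> r < 3 -> d < bb -> c < mm -> c' < mm -> s < QQ ->
  enc ta r d c c' s < n.
Proof.
move=> H1 H2 H3 H4 H5 H6; rewrite /enc.
apply: (leq_trans (lt_step H1 (lt_step H2 (lt_step H3 (lt_step H4 (lt_step H5 H6)))))).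
have := leq_divM n CC; rewrite -/bb /CC; nia.
Qed.


Lemma P (x x' : T) (i : 'I_t) (c c' : 'I_mm) (F : {set T}) :
  (x != x') || (c == c') -> tag x != i -> tag x' != i -> #|F| <= 2 * k ->
  exists y : T, [/\ tag y = i, y \notin F, col [set x; y] = c & col [set x'; y] = c'].
Proof.
move=> Hxc Hx Hx' HF.
have [r [Hr Hfr]] : exists r, r < 3 /\ (x != x' -> feat r x != feat r x').
  case: (eqVneq x x') => [_|Hne]; first by exists 0.
  case: (boolP [exists r : 'I_3, feat r x != feat r x']).
    by case/existsP => r Hr; exists r; split => //; exact: ltn_ord.
  rewrite negb_exists => /forallP Hall; case/negP: Hne; apply/eqP/feat_inj => r Hr.
  by have := Hall (Ordinal Hr); rewrite negbK => /eqP.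
set d := feat r x.
have [ta Hta /andP [Hd1 Hd2]] := paley (tau_lt x) (tau_lt x').
have Hd : d < bb by exact: feat_lt.
have Hlt : forall s : 'I_QQ, enc ta r d c c' s < n.
  by move=> s; apply: enc_lt => //; exact: ltn_ord.
pose ys (s : 'I_QQ) : T := @existT 'I_t (fun _ => 'I_n) i (Ordinal (Hlt s)).
have ysinj : injective ys.
  move=> s1 s2 E.
  have /= E' := congr1 (fun u : T => nat_of_ord (tagged u)) E.
  have [_ D1] := enc_dec s1 Hta Hr Hd (ltn_ord c) (ltn_ord c').
  have [_ D2] := enc_dec s2 Hta Hr Hd (ltn_ord c) (ltn_ord c').
  by apply: val_inj; rewrite /= -D1 -D2 E'.
have [s Hs] : exists s, ys s \notin F.
  apply/existsP; rewrite -negb_forall; apply/negP => /forallP Hall.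
  have : ys @: 'I_QQ \subset F by apply/subsetP => y /imsetP [s _ ->]; exact: Hall.
  move/subset_leq_card; rewrite card_imset // card_ord /QQ /mm; lia.
have [[D0 D1 D2 D3 D4] _] := enc_dec s Hta Hr Hd (ltn_ord c) (ltn_ord c').
exists (ys s); split => //.
  rewrite colE; last by rewrite /dom /tau /jj /= D0.
  rewrite /pc /jj /= D1 D2 eqxx; apply: val_inj => /=; by rewrite D3.
rewrite colE; last by rewrite /dom /tau /jj /= D0.
rewrite /pc /jj /= D1 D2.
case: (eqVneq x x') Hxc Hfr => [<- /= /eqP Ec _ | Hne _ /(_ isT) Hne'].
  by rewrite /d eqxx; apply: val_inj => /=; rewrite D3 Ec.
have -> : (feat r x' == d) = false by rewrite eq_sym; exact: negbTE Hne'.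
by apply: val_inj => /=; rewrite D4.
Qed.

End Col.


Lemma succmodP l L : l < L ->
  (l + 1 < L /\ (l + 1) %% L = l + 1) \/ (l + 1 = L /\ (l + 1) %% L = 0).
Proof.
move=> H; case: (ltnP (l + 1) L) => H1.
  by left; rewrite modn_small.
right; have E : l + 1 = L by lia.
by rewrite E modnn.
Qed.

Lemma set2C (T : finType) (a b : T) : [set a; b] = [set b; a].
Proof. by rewrite setUC. Qed.

Section Fill.
Variables (T : finType) (I : eqType) (tg : T -> I) (mm K : nat) (col : {set T} -> 'I_mm).
Hypothesis HP : forall (x x' : T) (i : I) (c c' : 'I_mm) (F : {set T}),
  (x != x') || (c == c') -> tg x != i -> tg x' != i -> #|F| <= K ->
  exists y : T, [/\ tg y = i, y \notin F, col [set x; y] = c & col [set x'; y] = c'].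
Variables (L : nat) (x0 : T) (cls : nat -> I) (kap : nat -> 'I_mm).
Hypotheses (HL : 3 <= L) (HLK : L <= K).
Hypothesis Hadj : forall l, l < L -> cls l != cls ((l + 1) %% L).

Lemma fill cnt : forall (tpl : nat -> option T),
  count (fun l => tpl l == None) (iota 0 L) = cnt ->
  tpl 0 != None ->
  (forall l v, l < L -> tpl l = Some v -> tg v = cls l) ->
  (forall l1 l2 v, l1 < L -> l2 < L -> tpl l1 = Some v -> tpl l2 = Some v -> l1 = l2) ->
  (forall l u v, l < L -> tpl l = Some u -> tpl ((l + 1) %% L) = Some v ->
       col [set u; v] = kap l) ->
  exists f : nat -> T, [/\ forall l v, l < L -> tpl l = Some v -> f l = v,
      forall l, l < L -> tg (f l) = cls l,
      forall l1 l2, l1 < L -> l2 < L -> f l1 = f l2 -> l1 = l2 &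
      forall l, l < L -> col [set f l; f ((l + 1) %% L)] = kap l].
Proof.
have HmL : forall l, ((l + 1) %% L) < L by move=> l; apply: ltn_pmod; lia.
elim: cnt => [|cnt IH] tpl Hcnt H0 Hcls Huniq Hcol.
  have Hs : forall l, l < L -> tpl l = Some (odflt x0 (tpl l)).
    move=> l Hl; case E: (tpl l) => [v|] //.
    have : has (fun l => tpl l == None) (iota 0 L).
      by apply/hasP; exists l; rewrite ?mem_iota ?E //; lia.
    by rewrite has_count Hcnt.
  exists (fun l => odflt x0 (tpl l)); split.
  - by move=> l v Hl ->.
  - by move=> l Hl; apply: Hcls (Hs l Hl).
  - by move=> l1 l2 H1 H2 E; apply: (Huniq l1 l2 _ H1 H2 (Hs l1 H1)); rewrite E; apply: Hs.
  - by move=> l Hl; apply: Hcol (Hs _ Hl) (Hs _ (HmL l)).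
have exN : exists l, (l < L) && (tpl l == None).
  have : has (fun l => tpl l == None) (iota 0 L) by rewrite has_count Hcnt.
  by case/hasP => l; rewrite mem_iota => Hl HN; exists l; rewrite HN andbT; lia.
case: (ex_minnP exN) => l /andP [Hl /eqP HN] Hmin.
have l0 : l != 0 by apply: contra H0 => /eqP <-; rewrite HN.
have lpos : 0 < l by rewrite lt0n.
have Ep : l = l.-1.+1 by rewrite prednK.
have Hlm : l.-1 < L by lia.
have Hlm1 : (l.-1 + 1) %% L = l by rewrite addn1 prednK ?modn_small.
have [u Hu] : exists u, tpl l.-1 = Some u.
  case E: (tpl l.-1) => [u|]; first by exists u.
  have := Hmin l.-1; rewrite Hlm E eqxx /= => /(_ isT); lia.
set r := (l + 1) %% L.
have Hr : r < L by exact: HmL.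
have rl : r != l by rewrite /r; case: (succmodP Hl) => [[_ ->]|[_ ->]]; lia.
have rl1 : r != l.-1 by rewrite /r; case: (succmodP Hl) => [[? ->]|[? ->]]; lia.
set F := [set odflt x0 (tpl (val j)) | j : 'I_L].
have HF : #|F| <= K by apply: leq_trans (leq_imset_card _ _) _; rewrite card_ord.
have Htu : tg u != cls l by rewrite (Hcls _ _ Hlm Hu) -{2}Hlm1; exact: Hadj.
have [y [Hty HyF Hy1 Hy2]] : exists y : T, [/\ tg y = cls l, y \notin F,
    col [set u; y] = kap l.-1 &
    forall w, tpl r = Some w -> col [set y; w] = kap l].
  case Er: (tpl r) => [w|].
    have Huw : u != w.
      by apply/eqP => E; subst w; move/eqP: rl1; apply; apply: (Huniq _ _ _ Hr Hlm Er Hu).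
    have Htw : tg w != cls l.
      by rewrite (Hcls _ _ Hr Er) eq_sym; exact: Hadj.
    have [y [H1 H2 H3 H4]] := @HP u w (cls l) (kap l.-1) (kap l) F
        (introT orP (or_introl Huw)) Htu Htw HF.
    by exists y; split => // w' [<-]; rewrite set2C.
  have [y [H1 H2 H3 H4]] := @HP u u (cls l) (kap l.-1) (kap l.-1) F
        (introT orP (or_intror (eqxx _))) Htu Htu HF.
  by exists y; split.
have yF : forall l', l' < L -> tpl l' = Some y -> False.
  move=> l' Hl' E; case/negP: HyF; apply/imsetP; exists (Ordinal Hl') => //.
  by rewrite /= E.
pose tpl' l' := if l' == l then Some y else tpl l'.
have [f [F1 F2 F3 F4]] : exists f : nat -> T, [/\ forall l' v, l' < L -> tpl' l' = Some v -> f l' = v,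
      forall l, l < L -> tg (f l) = cls l,
      forall l1 l2, l1 < L -> l2 < L -> f l1 = f l2 -> l1 = l2 &
      forall l, l < L -> col [set f l; f ((l + 1) %% L)] = kap l].
  apply: IH.
  - have E1 : count (fun l' => tpl l' == None) (iota 0 L) =
              count (predU (fun l' => tpl' l' == None) (pred1 l)) (iota 0 L).
      apply: eq_count => l' /=; rewrite /tpl'; case: (eqVneq l' l) => [->|ne].
        by rewrite HN !eqxx.
      by rewrite orbF.
    have E2 : count (predI (fun l' => tpl' l' == None) (pred1 l)) (iota 0 L) = 0.
      rewrite (eq_count (a2 := pred0)) ?count_pred0 // => l' /=.
      by rewrite /tpl'; case: (eqVneq l' l); rewrite ?andbF.
    have E3 : count (pred1 l) (iota 0 L) = 1.
      by rewrite (count_uniq_mem _ (iota_uniq 0 L)) mem_iota /=; case: ltnP Hl => //; lia.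
    have := count_predUI (fun l' => tpl' l' == None) (pred1 l) (iota 0 L).
    by rewrite -E1 E2 E3 Hcnt addn0 addn1 => -[->].
  - by rewrite /tpl'; case: (0 == l).
  - move=> l' v Hl'; rewrite /tpl'; case: eqVneq => [-> [<-] //|_]; exact: Hcls.
  - move=> l1 l2 v H1 H2; rewrite /tpl'.
    case: eqVneq => [-> [<-]|n1]; case: eqVneq => [->|n2] //.
    + by move=> E; case: (yF _ H2 E).
    + by move=> E [E']; subst v; case: (yF _ H1 E).
    + exact: Huniq.
  - move=> l' u' v' Hl'; rewrite /tpl'.
    case: eqVneq => [El [<-]|nl].
      subst l'; rewrite -/r (negbTE rl) => Er; exact: Hy2.
    case: eqVneq => [El' E' [<-]|nl' E1 E2]; last exact: Hcol.
    have El1 : l' = l.-1.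
      move: El'; case: (succmodP Hl') => [[_ ->]|[_ ->]]; lia.
    by subst l'; move: E'; rewrite Hu => -[<-].
exists f; split => //.
move=> l' v Hl' E; apply: F1 => //; rewrite /tpl'; case: eqVneq => // El.
by move: E; rewrite El HN.
Qed.

End Fill.

Lemma mk_cycle t (n : 'I_t -> nat) (mm : nat) (col : {set Kvert n} -> 'I_mm) L
  (f : nat -> Kvert n) (cls : nat -> 'I_t) (kap : nat -> 'I_mm) :
  3 <= L -> (forall l, l < L -> tag (f l) = cls l) ->
  (forall l, l < L -> cls l != cls ((l + 1) %% L)) ->
  (forall l1 l2, l1 < L -> l2 < L -> f l1 = f l2 -> l1 = l2) ->
  (forall l, l < L -> col [set f l; f ((l + 1) %% L)] = kap l) ->
  (forall l1 l2, l1 < L -> l2 < L -> kap l1 = kap l2 -> l1 = l2) ->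
  is_graph_cycle (@Kadj t n) (mkseq f L) /\ rainbow col (mkseq f L).
Proof.
move=> HL Htg Hadj Hinj Hcol Hk.
have HmL : forall l, ((l + 1) %% L) < L by move=> l; apply: ltn_pmod; lia.
have Hs : size (mkseq f L) = L by rewrite size_mkseq.
split; first split.
- by rewrite Hs.
- rewrite map_inj_in_uniq ?iota_uniq // => a b; rewrite !mem_iota /= !add0n.
  exact: Hinj.
- apply/(cycle_nthP (f 0)); first by rewrite Hs; lia.
  rewrite Hs => i Hi; rewrite !nth_mkseq // /Kadj Htg // Htg //; exact: Hadj.
- rewrite /rainbow.
  have -> : [seq col i | i <- cycle_edges (mkseq f L)] = mkseq kap L.
    apply: (eq_from_nth (x0 := kap 0)); first by rewrite size_map size_cycle_edges Hs size_mkseq.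
    rewrite size_map size_cycle_edges Hs => i Hi.
    rewrite (nth_map set0); last by rewrite size_cycle_edges Hs.
    rewrite /cycle_edges (nth_map (f 0, f 0)); last by rewrite size_zip size_rot minnn Hs.
    by rewrite nth_zip_rot ?Hs // !nth_mkseq //=; apply: Hcol.
  rewrite map_inj_in_uniq ?iota_uniq // => a b; rewrite !mem_iota /= !add0n.
  exact: Hk.
Qed.

Lemma finish t (n : 'I_t -> nat) (mm K : nat) (col : {set Kvert n} -> 'I_mm)
  (HP : forall (x x' : Kvert n) (i : 'I_t) (c c' : 'I_mm) (F : {set Kvert n}),
    (x != x') || (c == c') -> tag x != i -> tag x' != i -> #|F| <= K ->
    exists y : Kvert n, [/\ tag y = i, y \notin F, col [set x; y] = c & col [set x'; y] = c'])
  L (x0 : Kvert n) (cls : nat -> 'I_t) (kap : nat -> 'I_mm) (tpl : nat -> option (Kvert n))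
  (S : {set Kvert n}) :
  3 <= L -> L <= K ->
  (forall l, l < L -> cls l != cls ((l + 1) %% L)) ->
  tpl 0 != None ->
  (forall l v, l < L -> tpl l = Some v -> tag v = cls l) ->
  (forall l1 l2 v, l1 < L -> l2 < L -> tpl l1 = Some v -> tpl l2 = Some v -> l1 = l2) ->
  (forall l u v, l < L -> tpl l = Some u -> tpl ((l + 1) %% L) = Some v ->
       col [set u; v] = kap l) ->
  (forall l1 l2, l1 < L -> l2 < L -> kap l1 = kap l2 -> l1 = l2) ->
  (forall v, v \in S -> exists2 l, l < L & tpl l = Some v) ->
  exists p, [/\ is_graph_cycle (@Kadj t n) p, {subset S <= p} & rainbow col p].
Proof.
move=> HL HLK Hadj H0 Hcls Huniq Hcol Hk HS.
have [f [F1 F2 F3 F4]] := fill (tg := tag) HP x0 HL HLK Hadj (erefl _) H0 Hcls Huniq Hcol.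
have [Hc Hr] := mk_cycle HL F2 Hadj F3 F4 Hk.
exists (mkseq f L); split => // v /HS [l Hl Ht].
rewrite -(F1 _ _ Hl Ht); apply/mapP; exists l => //; by rewrite mem_iota.
Qed.


Section Up.
Variables (t n k : nat).
Hypotheses (k2 : 2 <= k) (t2 : 2 <= t).
Hypothesis hb : CC k + t + 1 <= bb n k.
Local Notation T := (Kvert (fun _ : 'I_t => n)).
Local Notation colk := (col k2 : {set T} -> 'I_(mm k)).

Let HP := P k2 hb.

Definition kap0 (c0 : nat) (l : nat) : 'I_(mm k) := Ordinal (ltn_pmod (l + c0) (mpos k2)).

Lemma kap0_inj c0 l1 l2 : l1 < 2 * k -> l2 < 2 * k -> kap0 c0 l1 = kap0 c0 l2 -> l1 = l2.
Proof.
move=> H1 H2 /(congr1 val) /= /eqP; rewrite eqn_modDr !modn_small ?/mm //.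
by move/eqP.
Qed.

Lemma tmpl1 (S : {set T}) (x0 : T) : #|S| = k ->
  (forall q, q < k -> exists c : 'I_t,
     (c != tag (nth x0 (enum S) q)) && (c != tag (nth x0 (enum S) ((q + 1) %% k)))) ->
  exists p, [/\ is_graph_cycle (@Kadj t (fun _ => n)) p, {subset S <= p} & rainbow colk p].
Proof.
move=> HS Hex.
set xs := enum S.
have Hsz : size xs = k by rewrite -HS cardE.
have Hu : uniq xs by exact: enum_uniq.
pose other q := odflt (tag x0) [pick c | (c != tag (nth x0 xs q)) && (c != tag (nth x0 xs ((q + 1) %% k)))].
have Hoth : forall q, q < k -> (other q != tag (nth x0 xs q)) && (other q != tag (nth x0 xs ((q + 1) %% k))).
  move=> q Hq; rewrite /other; case: pickP => [c //|H].
  by have [c Hc] := Hex q Hq; rewrite H in Hc.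
pose tpl l := if l %% 2 == 0 then Some (nth x0 xs (l %/ 2)) else None.
pose cls l := if l %% 2 == 0 then tag (nth x0 xs (l %/ 2)) else other (l %/ 2).
have ev : forall l, l %% 2 = 0 -> (l %% 2 == 0) = true by move=> l ->.
have od : forall l, l %% 2 = 1 -> (l %% 2 == 0) = false by move=> l ->.
apply: (finish HP (L := 2 * k) x0 (cls := cls) (kap := kap0 0) (tpl := tpl)).
- lia.
- by [].
- move=> l Hl; case: (succmodP Hl) => [[H1 ->]|[H1 ->]]; rewrite /cls.
    case: (eqVneq (l %% 2) 0) => e.
      rewrite od; last by lia.
      have -> : (l + 1) %/ 2 = l %/ 2 by lia.
      by rewrite eq_sym; case/andP: (Hoth (l %/ 2) ltac:(lia)).
    rewrite ev; last by lia.
    have -> : (l + 1) %/ 2 = (l %/ 2 + 1) %% k by rewrite modn_small; lia.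
    by case/andP: (Hoth (l %/ 2) ltac:(lia)).
  rewrite od; last by lia.
  rewrite div0n.
  have E : (l %/ 2 + 1) %% k = 0 by rewrite (_ : l %/ 2 + 1 = k) ?modnn //; lia.
  by case/andP: (Hoth (l %/ 2) ltac:(lia)); rewrite E.
- by rewrite /tpl mod0n.
- move=> l v Hl; rewrite /tpl /cls; case: eqP => // _ [<-] //.
- move=> l1 l2 v H1 H2; rewrite /tpl; case: eqP => // e1 [<-]; case: eqP => // e2 [] /eqP.
  rewrite nth_uniq ?Hsz //; [move/eqP => E; lia | lia | lia].
- move=> l u v Hl; rewrite /tpl; case: eqP => // e1 _.
  case: (succmodP Hl) => [[H1 ->]|[H1 ->]]; last by lia.
  rewrite od //; lia.
- by move=> l1 l2 H1 H2; apply: kap0_inj.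
- move=> v Hv.
  have vx : v \in xs by rewrite mem_enum.
  exists (2 * index v xs); first by rewrite -index_mem Hsz in vx; lia.
  rewrite /tpl ev; last by lia.
  rewrite (_ : 2 * index v xs %/ 2 = index v xs); last by lia.
  by rewrite nth_index.
Qed.


Lemma tmpl2 (S : {set T}) (x0 b0 : T) : #|S| = k -> t = 2 -> x0 \in S -> b0 \in S ->
  tag b0 != tag x0 ->
  exists p, [/\ is_graph_cycle (@Kadj t (fun _ => n)) p, {subset S <= p} & rainbow colk p].
Proof.
move=> HS Ht Hx0 Hb0 Hba.
set a0 := tag x0; set a1 := tag b0.
set as_ := [seq v <- enum S | tag v == a0].
set bs := [seq v <- enum S | tag v != a0].
set s := size as_; set s' := size bs.
have Hss : s + s' = k.
  rewrite /s /s' !size_filter -HS cardE.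
  by rewrite -(count_predC (fun v => tag v == a0)).
have Has : forall v, (v \in as_) = (v \in S) && (tag v == a0) by move=> v; rewrite mem_filter mem_enum andbC.
have Hbs : forall v, (v \in bs) = (v \in S) && (tag v != a0) by move=> v; rewrite mem_filter mem_enum andbC.
have s1 : 0 < s by rewrite /s -has_predT; apply/hasP; exists x0; rewrite // Has Hx0 eqxx.
have s'1 : 0 < s' by rewrite /s' -has_predT; apply/hasP; exists b0; rewrite // Hbs Hb0 Hba.
have Uas : uniq as_ by apply: filter_uniq; exact: enum_uniq.
have Ubs : uniq bs by apply: filter_uniq; exact: enum_uniq.
have tagb : forall v, v \in bs -> tag v = a1.
  move=> v; rewrite Hbs => /andP [_ H]; apply: val_inj.
  have Hba' : a1 != a0 := Hba.
  move: (ltn_ord (tag v)) (ltn_ord a0) (ltn_ord a1) H Hba'; rewrite -!(inj_eq val_inj) /=.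
  lia.
have taga : forall v, v \in as_ -> tag v = a0 by move=> v; rewrite Has => /andP [_ /eqP].
pose tpl l := if l < 2 * s then (if l %% 2 == 0 then Some (nth x0 as_ (l %/ 2)) else None)
              else (if l %% 2 == 1 then Some (nth x0 bs ((l - 2 * s) %/ 2)) else None).
pose cls l := if l %% 2 == 0 then a0 else a1.
pose c0 := nat_of_ord (colk [set nth x0 bs (s'.-1); nth x0 as_ 0]).
have ev : forall l, l %% 2 = 0 -> (l %% 2 == 0) = true by move=> l ->.
have od : forall l, l %% 2 = 1 -> (l %% 2 == 0) = false by move=> l ->.
have ev1 : forall l, l %% 2 = 0 -> (l %% 2 == 1) = false by move=> l ->.
have od1 : forall l, l %% 2 = 1 -> (l %% 2 == 1) = true by move=> l ->.
have a01 : a0 != a1 by rewrite eq_sym.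
apply: (finish HP (L := 2 * k) x0 (cls := cls) (kap := kap0 (c0 + 1)) (tpl := tpl)).
- lia.
- by [].
- move=> l Hl; case: (succmodP Hl) => [[H1 ->]|[H1 ->]]; rewrite /cls.
    case: (eqVneq (l %% 2) 0) => e.
      rewrite od; last by lia.
      done.
    rewrite ev; last by lia.
    by rewrite eq_sym.
  rewrite mod0n /= od; last by lia.
  by rewrite eq_sym.
- by rewrite /tpl ifT ?mod0n //; lia.
- move=> l v Hl; rewrite /tpl /cls; case: ltnP => h1.
    case: eqP => // e [<-]; apply: taga; apply: mem_nth; rewrite -/s; lia.
  case: eqP => // e [<-]; rewrite od //; apply: tagb; apply: mem_nth; rewrite -/s'; lia.
- move=> l1 l2 v H1 H2; rewrite /tpl.
  case: ltnP => h1; case: eqP => // e1 [<-]; case: ltnP => h2; case: eqP => // e2 [] /eqP.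
  + rewrite nth_uniq // -/s; [move/eqP => E; lia | lia | lia].
  + move=> /eqP E; have := mem_nth x0 (_ : l1 %/ 2 < size as_); rewrite -E Has => /(_ ltac:(rewrite -/s; lia)).
    have := mem_nth x0 (_ : (l2 - 2 * s) %/ 2 < size bs); rewrite Hbs => /(_ ltac:(rewrite -/s'; lia)).
    by case/andP => _ /negbTE ->; rewrite andbF.
  + move=> /eqP E; have := mem_nth x0 (_ : l2 %/ 2 < size as_); rewrite E Has => /(_ ltac:(rewrite -/s; lia)).
    have := mem_nth x0 (_ : (l1 - 2 * s) %/ 2 < size bs); rewrite Hbs => /(_ ltac:(rewrite -/s'; lia)).
    by case/andP => _ /negbTE ->; rewrite andbF.
  + rewrite nth_uniq // -/s'; [move/eqP => E; lia | lia | lia].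
- move=> l u v Hl; case: (succmodP Hl) => [[H1 ->]|[H1 ->]].
    rewrite /tpl; case: ltnP => h1; case: eqP => // e1 _; case: ltnP => h2; case: eqP => // e2 _; lia.
  rewrite /tpl ifF; last by lia.
  rewrite od1; last by lia.
  rewrite ifT ?mod0n //; last by lia.
  move=> [<-] [<-]; apply: val_inj => /=.
  rewrite (_ : (l - 2 * s) %/ 2 = s'.-1); last by lia.
  rewrite -/c0 (_ : l + (c0 + 1) = c0 + mm k); last by rewrite /mm; lia.
  rewrite modnDr modn_small //; exact: ltn_ord.
- by move=> l1 l2 H1 H2; apply: kap0_inj.
- move=> v Hv; case: (eqVneq (tag v) a0) => Ha.
    have va : v \in as_ by rewrite Has Hv Ha eqxx.
    exists (2 * index v as_); first by rewrite -index_mem -/s in va; lia.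
    rewrite /tpl ifT; last by rewrite -index_mem -/s in va; lia.
    rewrite ev; last by lia.
    rewrite (_ : 2 * index v as_ %/ 2 = index v as_); last by lia.
    by rewrite nth_index.
  have vb : v \in bs by rewrite Hbs Hv Ha.
  exists (2 * s + 2 * index v bs + 1); first by rewrite -index_mem -/s' in vb; lia.
  rewrite /tpl ifF; last by lia.
  rewrite od1; last by lia.
  rewrite (_ : (2 * s + 2 * index v bs + 1 - 2 * s) %/ 2 = index v bs); last by lia.
  by rewrite nth_index.
Qed.

End Up.


Lemma three t (a b : 'I_t) : 3 <= t -> exists c : 'I_t, (c != a) && (c != b).
Proof.
move=> t3.
have [c [Hc Ha Hb]] : exists c, [/\ c < 3, c != nat_of_ord a & c != nat_of_ord b].
  case: (ltnP 0 a) => ha; case: (ltnP 0 b) => hb.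
  - by exists 0; split => //; lia.
  - case: (eqVneq (nat_of_ord a) 1) => e; [exists 2 | exists 1]; split => //; lia.
  - case: (eqVneq (nat_of_ord b) 1) => e; [exists 2 | exists 1]; split => //; lia.
  - by exists 1; split => //; lia.
have Hct : c < t by lia.
by exists (Ordinal Hct); rewrite -!(inj_eq val_inj) /= Ha Hb.
Qed.

Lemma partB_up t n k (k2 : 2 <= k) : 2 <= t -> CC k + t + 1 <= bb n k ->
  crx_colourable (@Kadj t (fun _ => n)) k (2 * k).
Proof.
move=> t2 hb; exists (col k2) => S HS.
have [x0 Hx0] : exists x0, x0 \in S by apply/card_gt0P; rewrite HS; lia.
have Hin : forall q, q < k -> nth x0 (enum S) q \in S.
  by move=> q Hq; rewrite -mem_enum; apply: mem_nth; rewrite -cardE HS.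
case: (ltnP 2 t) => Ht.
  by apply: (tmpl1 k2 t2 hb (x0 := x0) HS) => q Hq; apply: three.
have Ht2 : t = 2 by lia.
case: (boolP [exists v in S, tag v != tag x0]).
  by case/existsP => b0 /andP [Hb0 Hba]; apply: (tmpl2 k2 t2 hb HS Ht2 Hx0 Hb0 Hba).
rewrite negb_exists => /forallP Hall.
have Htag : forall v, v \in S -> tag v = tag x0.
  by move=> v Hv; have := Hall v; rewrite Hv /= negbK => /eqP.
have [c Hc] : exists c : 'I_t, c != tag x0.
  have [c [Hc Ha]] : exists c, c < t /\ c != nat_of_ord (tag x0).
    case: (eqVneq (nat_of_ord (tag x0)) 0) => e; [exists 1 | exists 0]; split => //; lia.
  by exists (Ordinal Hc); rewrite -(inj_eq val_inj).
apply: (tmpl1 k2 t2 hb (x0 := x0) HS) => q Hq; exists c.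
rewrite !Htag ?Hc //; apply: Hin => //; apply: ltn_pmod; lia.
Qed.

Theorem theorem3p4 :
  (forall (t : nat) (n : 'I_t -> nat),
      3 <= t ->
      (forall i : 'I_t, 1 <= n i) ->
      (forall i j : 'I_t, i <= j -> n i <= n j) ->
      crx_is (@Kadj t n) 1 3)
  /\
  (forall k t : nat, 2 <= k -> 2 <= t ->
      exists N : nat, forall n : nat, N <= n ->
        crx_is (@Kadj t (fun _ => n)) k (2 * k)).
Proof.
split.
  move=> t n t3 Hn _; split; first exact: partA_up.
  by move=> m Hm; apply: partA_low.
move=> k t k2 t2.
have Cpos : 0 < CC k by rewrite /CC /QQ /mm; nia.
have Ck : k <= CC k by rewrite /CC /QQ /mm; nia.
exists (CC k * (CC k + t + 1)) => n HN; split.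
  apply: partB_up => //.
  rewrite /bb; apply: leq_trans (leq_div2r _ HN); rewrite mulKn //.
move=> m Hm; apply: partB_low => //; first by lia.
have : CC k <= CC k * (CC k + t + 1) by apply: leq_pmulr; lia.
lia.
Qed.
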